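(* Let $\alpha \in [0,1)$ and $k \in \{0,\dots,m-1\}$. For the homogeneous sample $\mathbf{S}_k = (S_k,\dots,S_k) \in \Omega$, $$B^*(\mathbf{S}_k) = S_{\min}\left(1 - \sqrt[n]{\alpha}\right) + S_k \sqrt[n]{\alpha},$$ where $B^*(\mathbf{S}_k)$ is the highest value assigned to $\mathbf{S}_k$ by any valid bound.
   Context: Fix integers $m \ge 2$, $n \ge 1$ and reals $S_{\min} < S_{\max}$; $S = \{S_0,\dots,S_{m-1}\}$ with $S_k = S_{\min} + k\frac{S_{\max}-S_{\min}}{m-1}$. $\mathcal{F}$ is the set of probability distributions on $S$; $E[F]$ is the mean. $\Omega$ is the set of samples of size $n$ from $S$, identified with their sorted versions. For $F \in \mathcal{F}$, $\mathbf{X}$ denotes a sample of $n$ i.i.d. draws from $F$. A bound is a function $B:\Omega\to\mathbb{R}$; it is valid (at level $1-\alpha$) if $P_F[B(\mathbf{X}) \le E[F]] \ge 1-\alpha$ for every $F \in \mathcal{F}$. *)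

(* Defs.v *)
From HB Require Import structures.
From mathcomp Require Import all_boot all_order all_algebra all_fingroup.
From mathcomp Require Import reals exp.
Set Implicit Arguments. Unset Strict Implicit. Unset Printing Implicit Defensive.
Import Order.TTheory GRing.Theory Num.Theory.
Local Open Scope ring_scope.

Section Defs.
Variable R : realType.
Variables (m n : nat) (Smin Smax : R).

Definition Spt (k : 'I_m) : R := Smin + k%:R * (Smax - Smin) / (m.-1)%:R.

Definition is_distr (F : 'I_m -> R) : Prop :=
  (forall k, 0 <= F k) /\ \sum_(k < m) F k = 1.

Definition meanF (F : 'I_m -> R) : R := \sum_(k < m) F k * Spt k.

Definition sample := {ffun 'I_n -> 'I_m}.

Definition probF (F : 'I_m -> R) (A : pred sample) : R :=
  \sum_(x : sample | A x) \prod_(i < n) F (x i).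

(* A bound on Omega (samples identified with their sorted versions) is the
   same as a function on ordered samples invariant under permutations. *)
Definition sym_bound (B : sample -> R) : Prop :=
  forall (s : 'S_n) (x : sample), B [ffun i => x (s i)] = B x.

Definition valid (alpha : R) (B : sample -> R) : Prop :=
  sym_bound B /\
  forall F, is_distr F -> 1 - alpha <= probF F (fun x => B x <= meanF F).

Definition homog (k : 'I_m) : sample := [ffun _ => k].

End Defs.

(* Main.v *)
Require Import Defs.
From HB Require Import structures.
From mathcomp Require Import all_boot all_order all_algebra all_fingroup.
From mathcomp Require Import reals exp.
From mathcomp Require Import ring lra.
Import Order.TTheory GRing.Theory Num.Theory.
Local Open Scope ring_scope.
Set Implicit Arguments. Unset Strict Implicit.

Section Aux.
Variable R : realType.
Variables (m n : nat) (Smin Smax : R).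
Hypothesis hS : Smin < Smax.

Lemma total (F : 'I_m -> R) : is_distr F ->
  \sum_(x : sample m n) \prod_(i < n) F (x i) = 1.
Proof.
move=> [F0 F1].
rewrite /sample -(bigA_distr_bigA (fun (i : 'I_n) (j : 'I_m) => F j)) /=.
by rewrite big1 // => i _.
Qed.

Lemma sum_excl (F : 'I_m -> R) (h : sample m n) : is_distr F ->
  \sum_(x : sample m n | x != h) \prod_(i < n) F (x i) =
  1 - \prod_(i < n) F (h i).
Proof.
move=> dF; have := total dF; rewrite (bigD1 h) //= => H.
lra.
Qed.

Lemma prod_ge0 (F : 'I_m -> R) (x : sample m n) : is_distr F ->
  0 <= \prod_(i < n) F (x i).
Proof. by move=> [F0 _]; apply: prodr_ge0 => i _. Qed.

Lemma probF_lb (F : 'I_m -> R) (A : pred (sample m n)) h : is_distr F ->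
  (forall x, x != h -> A x) -> 1 - \prod_(i < n) F (h i) <= probF F A.
Proof.
move=> dF HA; rewrite -(sum_excl h dF) /probF [X in X <= _]big_mkcond
  [X in _ <= X]big_mkcond /=.
apply: ler_sum => x _.
case: (boolP (x != h)) => xh; first by rewrite HA.
by case: (A x) => //; apply: prod_ge0.
Qed.

Lemma probF_ub (F : 'I_m -> R) (A : pred (sample m n)) h : is_distr F ->
  ~~ A h -> probF F A <= 1 - \prod_(i < n) F (h i).
Proof.
move=> dF HA; rewrite -(sum_excl h dF) /probF [X in X <= _]big_mkcond
  [X in _ <= X]big_mkcond /=.
apply: ler_sum => x _.
case: (boolP (x != h)) => xh.
  by case: (A x) => //; apply: prod_ge0.
by move: xh; rewrite negbK => /eqP ->; rewrite (negbTE HA).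
Qed.

Lemma probF_all (F : 'I_m -> R) (A : pred (sample m n)) : is_distr F ->
  (forall x, A x) -> probF F A = 1.
Proof.
move=> dF HA; rewrite /probF -[RHS](total dF); apply: eq_bigl => x.
by rewrite HA.
Qed.

Lemma prod_homog (F : 'I_m -> R) k :
  \prod_(i < n) F (homog n k i) = F k ^+ n.
Proof.
rewrite /homog (eq_bigr (fun _ => F k)); last by move=> i _; rewrite ffunE.
by rewrite prodr_const card_ord.
Qed.

Lemma Spt_ge (j : 'I_m) : Smin <= Spt Smin Smax j.
Proof.
rewrite /Spt lerDl; apply: divr_ge0; last exact: ler0n.
by apply: mulr_ge0; [exact: ler0n | rewrite subr_ge0 ltW].
Qed.

Lemma mean_lb (F : 'I_m -> R) k : is_distr F ->
  F k * Spt Smin Smax k + (1 - F k) * Smin <= meanF Smin Smax F.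
Proof.
move=> [F0 F1]; rewrite /meanF (bigD1 k) //= lerD2l.
have -> : 1 - F k = \sum_(j < m | j != k) F j.
  by rewrite -F1 (bigD1 k) //= addrC addrK.
rewrite mulr_suml; apply: ler_sum => j _.
by apply: ler_wpM2l => //; apply: Spt_ge.
Qed.

End Aux.

Theorem theorem2 (R : realType) (m n : nat) (Smin Smax : R)
  (hm : (2 <= m)%N) (hn : (1 <= n)%N) (hS : Smin < Smax)
  (alpha : R) (ha0 : 0 <= alpha) (ha1 : alpha < 1) (k : 'I_m) :
  let r := powR alpha (n%:R)^-1 in
  let c := Smin * (1 - r) + Spt Smin Smax k * r in
  (exists B : sample m n -> R, valid Smin Smax alpha B /\ B (homog n k) = c) /\
  (forall B : sample m n -> R, valid Smin Smax alpha B -> B (homog n k) <= c).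
Proof.
move=> r c.
have r0 : 0 <= r by apply: powR_ge0.
have rn : r ^+ n = alpha.
  rewrite -powR_mulrn // -powRrM mulVf ?powRr1 //.
  by rewrite pnatr_eq0 -lt0n.
have r1 : r < 1.
  rewrite ltNge; apply/negP => H; have := exprn_ege1 n H.
  by rewrite rn => /(lt_le_trans ha1); rewrite ltxx.
set d := Spt Smin Smax k - Smin.
have d0 : 0 <= d by rewrite subr_ge0 Spt_ge.
have cE : c = Smin + r * d by rewrite /c /d; ring.
split.
  pose B := fun x : sample m n => if x == homog n k then c else Smin.
  exists B; split; last by rewrite /B eqxx.
  split.
    move=> s x; rewrite /B.
    have -> : ([ffun i => x (s i)] == homog n k) = (x == homog n k).
      apply/eqP/eqP => [H|->].
        apply/ffunP => i; rewrite /homog ffunE.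
        have := congr1 (fun f : sample m n => f (s^-1 i)%g) H.
        by rewrite /homog !ffunE permKV.
      by apply/ffunP => i; rewrite /homog !ffunE.
    by [].
  move=> F dF.
  have mlb := mean_lb hS k dF.
  have mS : Smin <= meanF Smin Smax F.
    have := Spt_ge hS k; have [F0 _] := dF; have := F0 k.
    move: mlb; rewrite -/d; nra.
  case: (lerP c (meanF Smin Smax F)) => hc.
    rewrite probF_all //; first by lra.
    by move=> x; rewrite /B; case: (x == homog n k).
  apply: le_trans; last first.
    apply: (probF_lb (h := homog n k)) => // x xh.
    by rewrite /B (negbTE xh).
  rewrite prod_homog lerD2l lerN2 -rn.
  have [F0 _] := dF.
  have Fkr : F k <= r.
    move: mlb hc; rewrite cE /d => mlb hc.
    have := F0 k; nra.
  by apply: lerXn2r => //; rewrite ?nnegrE.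
move=> B [_ vB]; rewrite leNgt; apply/negP => hb.
set b := B (homog n k) in hb.
pose q := (b - c) / (d + 1).
have q0 : 0 < q by apply: divr_gt0; lra.
have qE : q * (d + 1) = b - c by rewrite /q divfK //; apply: lt0r_neq0; lra.
pose eps := Num.min (1 - r) q.
have e0 : 0 < eps by rewrite /eps lt_min; apply/andP; split; lra.
have e1 : eps <= 1 - r by rewrite /eps ge_min lexx.
have e2 : eps <= q by rewrite /eps ge_min lexx orbT.
pose p := r + eps.
have hm' : (0 < m)%N by apply: leq_trans hm.
pose z : 'I_m := Ordinal hm'.
pose F := fun j : 'I_m => (if j == k then p else 0) + (if j == z then 1 - p else 0).
have dF : is_distr F.
  split.
    move=> j; rewrite /F; apply: addr_ge0; case: ifP => _ //; rewrite /p; lra.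
  rewrite /F big_split /= -!big_mkcond /= !big_pred1_eq; ring.
have Spz : Spt Smin Smax z = Smin by rewrite /Spt /= mul0r mul0r addr0.
have mF : meanF Smin Smax F = p * Spt Smin Smax k + (1 - p) * Smin.
  rewrite /meanF (eq_bigr (fun j => (if j == k then p * Spt Smin Smax k else 0)
     + (if j == z then (1 - p) * Smin else 0))).
    by rewrite big_split /= -!big_mkcond /= !big_pred1_eq.
  move=> j _; rewrite /F mulrDl; congr (_ + _); case: eqP => [->|_] //;
    by rewrite ?mul0r // Spz.
have nA : ~~ (B (homog n k) <= meanF Smin Smax F).
  rewrite -ltNge mF -/b.
  have : eps * d < b - c by rewrite -qE; nra.
  move: cE; rewrite /p /d; nra.
have := @probF_ub R m n F (fun x => B x <= meanF Smin Smax F) (homog n k) dF nA.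
have := vB F dF.
rewrite prod_homog => h1 h2.
have h3 := le_trans h1 h2.
have Fk : p <= F k.
  rewrite /F eqxx; case: ifP => _; rewrite /p; lra.
have : alpha < F k ^+ n.
  rewrite -rn; apply: (lt_le_trans (y := p ^+ n)).
    rewrite ltrXn2r // ?(lt0n_neq0 hn) // /p; lra.
  have p0 : 0 <= p by rewrite /p; lra.
  by apply: lerXn2r; rewrite // nnegrE // (le_trans p0 Fk).
move=> H; move: h3; rewrite lerD2l lerN2 => h4.
by have := lt_le_trans H h4; rewrite ltxx.
Qed.
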